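(* Let $(\mathcal{G}(u_0,v_0),-\Omega^2\,du\,dv)$ with radial function $r$ and stress-energy components $T_{uu},T_{uv},T_{vv}$ be as described in the context, satisfying assumptions (I)–(VII), and suppose there is $\delta>0$ such that, with $\mathcal{W}=\mathcal{W}(\delta)$, condition (A), $T_{uv}\Omega^{-2}<\frac1{4r^2}$, holds on $\mathcal{A}\cap\mathcal{W}$. If $\mathcal{A}\cap\mathcal{W}\neq\emptyset$, then $\mathcal{A}\cap\mathcal{W}$ is connected and terminates (i.e. its future limit point in $\overline{K}(u_0,v_0)$ lies) either at $i^+=(0,\infty)$, in which case it is asymptotic to the event horizon, or on the Cauchy horizon $(0,u_0]\times\{\infty\}\subset\overline{K}(u_0,v_0)$. In the latter case, $\mathcal{W}\cap\mathcal{R}$ contains a rectangle $K(u_1,v_1)=[0,u_1]\times[v_1,\infty)$ for some $u_1\in(0,u_0]$, $v_1\in[v_0,\infty)$.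
   Context: Fix double null coordinates $(u,v)$ on $\mathbb{R}^2$ with Minkowski metric $-du\,dv$, time-oriented so that $u,v$ increase toward the future. For $u,v>0$, $K(u,v)=[0,u]\times[v,\infty)$; $\overline{K}(u_0,v_0)=[0,u_0]\times[v_0,\infty]$. Fix $u_0,v_0>0$, $\mathcal{C}_{in}=[0,u_0]\times\{v_0\}$, $\mathcal{C}_{out}=\{0\}\times[v_0,\infty)$ (the event horizon); causal notions refer to $K(u_0,v_0)$. Let $\mathcal{G}(u_0,v_0)\subset K(u_0,v_0)$ be globally hyperbolic, relatively open, containing $\mathcal{C}_{in}\cup\mathcal{C}_{out}$, with metric $-\Omega^2du\,dv$ ($\Omega>0$ smooth), smooth $r\ge0$ with $r>0$ on $\mathcal{C}_{in}\cup\mathcal{C}_{out}$, and smooth $T_{uu},T_{uv},T_{vv}$ (stress-energy components of the spherically symmetric spacetime $-\Omega^2du\,dv+r^2g_{S^2}$) satisfying $\partial_u(\Omega^{-2}\partial_u r)=-r\Omega^{-2}T_{uu}$, $\partial_v(\Omega^{-2}\partial_v r)=-r\Omega^{-2}T_{vv}$, $\partial_u m=2r^2\Omega^{-2}(T_{uv}\partial_u r-T_{uu}\partial_v r)$, $\partial_v m=2r^2\Omega^{-2}(T_{uv}\partial_v r-T_{vv}\partial_u r)$, with $m=\frac r2(1+4\Omega^{-2}\partial_u r\partial_v r)$. Define $\mathcal{R}=\{\partial_v r>0,\partial_u r<0\}$, $\mathcal{T}=\{\partial_v r<0,\partial_u r<0\}$, $\mathcal{A}=\{\partial_v r=0,\partial_u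 r<0\}$, $r_+=\sup_{\mathcal{C}_{out}}r$, $m_+=\sup_{\mathcal{C}_{out}}m$, $\mathcal{W}(\delta)=\{(u,v)\in\mathcal{G}(u_0,v_0):r\ge r_+-\delta\}$. Assumptions: (I) $T_{uu},T_{uv},T_{vv}\ge0$; (II) $J^-(\mathcal{G}(u_0,v_0))\subset\mathcal{G}(u_0,v_0)$; (III) $r\le r_+<\infty$ on $\mathcal{C}_{out}$; (IV) $0\le m\le m_+<\infty$ on $\mathcal{C}_{out}$; (V) $\partial_u r<0$ on $\mathcal{C}_{out}$; (VI) $\partial_v r>0$ on $\mathcal{C}_{out}$; (VII) (closures in $K(u_0,v_0)$) if $p\in\overline{\mathcal{R}}$, $q\in\overline{\mathcal{R}}\cap I^-(p)$, $J^-(p)\cap J^+(q)\setminus\{p\}\subset\mathcal{R}\cup\mathcal{A}$, then $p\in\mathcal{R}\cup\mathcal{A}$. A subset of $\mathcal{A}$ is asymptotic to the event horizon if $i^+=(0,\infty)$ is a limit point of it in $\overline{K}(u_0,v_0)$. *)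

(* Defs.v *)
(* Stdlib reals + Coquelicot.  Points of R^2 are pairs p = (u, v) : R * R,
   p.1 = u, p.2 = v (double null coordinates). *)
From Stdlib Require Import Reals List.
From Coquelicot Require Import Coquelicot.
Open Scope R_scope.

Definition pt := (R * R)%type.

Inductive dir := Du | Dv.

Fixpoint pder (l : list dir) (f : R -> R -> R) : R -> R -> R :=
  match l with
  | nil => f
  | Du :: l' => fun u v => Derive (fun x => pder l' f x v) u
  | Dv :: l' => fun u v => Derive (fun y => pder l' f u y) v
  end.

Definition smooth_on (U : pt -> Prop) (f : R -> R -> R) : Prop :=
  forall (l : list dir) (p : pt), U p ->
    ex_derive (fun x => pder l f x (snd p)) (fst p) /\
    ex_derive (fun y => pder l f (fst p) y) (snd p) /\
    continuous (fun q : pt => pder l f (fst q) (snd q)) p.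

Definition du (f : R -> R -> R) (u v : R) : R := Derive (fun x => f x v) u.
Definition dv (f : R -> R -> R) (u v : R) : R := Derive (fun y => f u y) v.

Definition Kset (u1 v1 : R) (p : pt) : Prop :=
  0 <= fst p <= u1 /\ v1 <= snd p.

(* causal / chronological relations in K(u0,v0) (conformally Minkowski,
   u and v increasing to the future) *)
Definition Jminus (u0 v0 : R) (p : pt) (q : pt) : Prop :=
  Kset u0 v0 q /\ fst q <= fst p /\ snd q <= snd p.
Definition Jplus (u0 v0 : R) (p : pt) (q : pt) : Prop :=
  Kset u0 v0 q /\ fst p <= fst q /\ snd p <= snd q.
Definition Iminus (u0 v0 : R) (p : pt) (q : pt) : Prop :=
  Kset u0 v0 q /\ fst q < fst p /\ snd q < snd p.

Definition Cin (u0 v0 : R) (p : pt) : Prop := 0 <= fst p <= u0 /\ snd p = v0.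
Definition Cout (v0 : R) (p : pt) : Prop := fst p = 0 /\ v0 <= snd p.

Definition rel_open_in_K (u0 v0 : R) (G : pt -> Prop) : Prop :=
  exists U : pt -> Prop, open U /\ forall p, G p <-> (U p /\ Kset u0 v0 p).

Definition bounded2 (S : pt -> Prop) : Prop :=
  exists M, forall p, S p -> Rabs (fst p) <= M /\ Rabs (snd p) <= M.

Definition compact2 (S : pt -> Prop) : Prop := closed S /\ bounded2 S.

(* global hyperbolicity (G is trivially strongly causal, being conformal to a
   subset of Minkowski space): causal diamonds J^+(p) /\ J^-(q) are compact *)
Definition glob_hyp (u0 v0 : R) (G : pt -> Prop) : Prop :=
  forall p q, G p -> G q ->
    compact2 (fun x => G x /\ Jplus u0 v0 p x /\ Jminus u0 v0 q x).

Definition closureK (u0 v0 : R) (S : pt -> Prop) (p : pt) : Prop :=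
  Kset u0 v0 p /\
  forall eps, 0 < eps -> exists x, S x /\ Rabs (fst x - fst p) < eps
                                     /\ Rabs (snd x - snd p) < eps.

Definition connected2 (S : pt -> Prop) : Prop :=
  ~ exists U1 U2 : pt -> Prop, open U1 /\ open U2 /\
      (forall p, S p -> U1 p \/ U2 p) /\
      (exists p, S p /\ U1 p) /\ (exists p, S p /\ U2 p) /\
      (forall p, S p -> U1 p -> U2 p -> False).

(* (ustar, oo) in the boundary {v = oo} of Kbar(u0,v0) is a limit point of S *)
Definition limit_pt_at_infinity (S : pt -> Prop) (ustar : R) : Prop :=
  forall eps V, 0 < eps -> exists p, S p /\ V < snd p /\ Rabs (fst p - ustar) < eps.

Definition terminates_at (S : pt -> Prop) (ustar : R) : Prop :=
  limit_pt_at_infinity S ustar /\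
  forall u', limit_pt_at_infinity S u' -> u' = ustar.

(* asymptotic to the event horizon: i^+ = (0, oo) is a limit point *)
Definition asymptotic_to_EH (S : pt -> Prop) : Prop := limit_pt_at_infinity S 0.

Definition hawking_mass (Om r : R -> R -> R) (u v : R) : R :=
  r u v / 2 * (1 + 4 / (Om u v) ^ 2 * du r u v * dv r u v).

Definition regR (G : pt -> Prop) (r : R -> R -> R) (p : pt) : Prop :=
  G p /\ dv r (fst p) (snd p) > 0 /\ du r (fst p) (snd p) < 0.
Definition regT (G : pt -> Prop) (r : R -> R -> R) (p : pt) : Prop :=
  G p /\ dv r (fst p) (snd p) < 0 /\ du r (fst p) (snd p) < 0.
Definition regA (G : pt -> Prop) (r : R -> R -> R) (p : pt) : Prop :=
  G p /\ dv r (fst p) (snd p) = 0 /\ du r (fst p) (snd p) < 0.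

Definition regW (G : pt -> Prop) (r : R -> R -> R) (rplus delta : R) (p : pt) : Prop :=
  G p /\ r (fst p) (snd p) >= rplus - delta.

Definition setup (u0 v0 : R) (G : pt -> Prop) (Om r Tuu Tuv Tvv : R -> R -> R) : Prop :=
  0 < u0 /\ 0 < v0 /\
  (forall p, G p -> Kset u0 v0 p) /\
  glob_hyp u0 v0 G /\
  rel_open_in_K u0 v0 G /\
  (forall p, Cin u0 v0 p \/ Cout v0 p -> G p) /\
  (exists U : pt -> Prop, open U /\ (forall p, G p -> U p) /\
     smooth_on U Om /\ smooth_on U r /\ smooth_on U Tuu /\
     smooth_on U Tuv /\ smooth_on U Tvv) /\
  (forall p, G p -> 0 < Om (fst p) (snd p)) /\
  (forall p, G p -> 0 <= r (fst p) (snd p)) /\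
  (forall p, Cin u0 v0 p \/ Cout v0 p -> 0 < r (fst p) (snd p)) /\
  (forall u v, G (u, v) ->
     du (fun a b => / (Om a b) ^ 2 * du r a b) u v
       = - r u v * / (Om u v) ^ 2 * Tuu u v) /\
  (forall u v, G (u, v) ->
     dv (fun a b => / (Om a b) ^ 2 * dv r a b) u v
       = - r u v * / (Om u v) ^ 2 * Tvv u v) /\
  (forall u v, G (u, v) ->
     du (hawking_mass Om r) u v
       = 2 * (r u v) ^ 2 / (Om u v) ^ 2 *
           (Tuv u v * du r u v - Tuu u v * dv r u v)) /\
  (forall u v, G (u, v) ->
     dv (hawking_mass Om r) u v
       = 2 * (r u v) ^ 2 / (Om u v) ^ 2 *
           (Tuv u v * dv r u v - Tvv u v * du r u v)).

(* Main.v *)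
Require Import Defs.
From Stdlib Require Import Reals Lra Psatz Classical.
From Coquelicot Require Import Coquelicot.
Open Scope R_scope.

Lemma mono_nonincr (f : R -> R) (a b : R) : a <= b ->
  (forall x, a <= x <= b -> exists d, is_derive f x d /\ d <= 0) -> f b <= f a.
Proof.
  intros Hab Hd.
  destruct (Req_dec a b) as [->|Hne]; [lra|].
  destruct (MVT_gen f a b (Derive f)) as [c [Hc Heq]].
  - intros x Hx. rewrite Rmin_left in Hx by lra. rewrite Rmax_right in Hx by lra.
    destruct (Hd x) as [d [H1 _]]; [lra|]. apply Derive_correct. eexists; eauto.
  - intros x Hx. rewrite Rmin_left in Hx by lra. rewrite Rmax_right in Hx by lra.
    destruct (Hd x) as [d [H1 _]]; [lra|]. apply continuity_pt_filterlim.
    apply (ex_derive_continuous f x). eexists; eauto.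
  - rewrite Rmin_left in Hc by lra. rewrite Rmax_right in Hc by lra.
    destruct (Hd c) as [d [H1 H2]]; [lra|].
    rewrite (is_derive_unique _ _ _ H1) in Heq. nra.
Qed.

Lemma mono_nondecr (f : R -> R) (a b : R) : a <= b ->
  (forall x, a <= x <= b -> exists d, is_derive f x d /\ 0 <= d) -> f a <= f b.
Proof.
  intros Hab Hd.
  assert (H := mono_nonincr (fun x => - f x) a b Hab).
  cut (- f b <= - f a); [lra|]. apply H.
  intros x Hx. destruct (Hd x Hx) as [d [H1 H2]]. exists (- d). split; [|lra].
  apply (is_derive_opp f x d H1).
Qed.

Lemma cont_pos (f : R -> R) (x : R) : continuous f x -> 0 < f x ->
  exists eps, 0 < eps /\ forall y, Rabs (y - x) < eps -> 0 < f y.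
Proof.
  intros Hc Hp.
  assert (Hl : locally (f x) (fun t => 0 < t)).
  { exists (mkposreal (f x) Hp). intros t Ht. simpl in Ht.
    change (Rabs (t - f x) < f x) in Ht. apply Rabs_def2 in Ht. lra. }
  destruct (Hc _ Hl) as [e He]. exists e. split; [apply cond_pos|].
  intros y Hy. apply He. exact Hy.
Qed.

Lemma cont_neg (f : R -> R) (x : R) : continuous f x -> f x < 0 ->
  exists eps, 0 < eps /\ forall y, Rabs (y - x) < eps -> f y < 0.
Proof.
  intros Hc Hp.
  destruct (cont_pos (fun t => - f t) x) as [e [He H]].
  - apply (continuous_opp f x Hc).
  - lra.
  - exists e. split; auto. intros y Hy. specialize (H y Hy). lra.
Qed.

Lemma cont2_pos (f : pt -> R) (p : pt) : continuous f p -> 0 < f p ->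
  exists eps, 0 < eps /\ forall q : pt, Rabs (fst q - fst p) < eps ->
     Rabs (snd q - snd p) < eps -> 0 < f q.
Proof.
  intros Hc Hp.
  assert (Hl : locally (f p) (fun t => 0 < t)).
  { exists (mkposreal (f p) Hp). intros t Ht. simpl in Ht.
    change (Rabs (t - f p) < f p) in Ht. apply Rabs_def2 in Ht. lra. }
  destruct (Hc _ Hl) as [e He]. exists e. split; [apply cond_pos|].
  intros q H1 H2. apply He. destruct p, q. split; assumption.
Qed.

Lemma cont2_neg (f : pt -> R) (p : pt) : continuous f p -> f p < 0 ->
  exists eps, 0 < eps /\ forall q : pt, Rabs (fst q - fst p) < eps ->
     Rabs (snd q - snd p) < eps -> f q < 0.
Proof.
  intros Hc Hp.
  destruct (cont2_pos (fun t => - f t) p) as [e [He H]].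
  - apply (continuous_opp f p Hc).
  - lra.
  - exists e. split; auto. intros q H1 H2. specialize (H q H1 H2). lra.
Qed.

Lemma deriv_neg_sign (f : R -> R) (c d : R) : is_derive f c d -> d < 0 ->
  exists eps, 0 < eps /\ (forall x, c < x < c + eps -> f x < f c) /\
                         (forall x, c - eps < x < c -> f c < f x).
Proof.
  intros Hd Hn. apply is_derive_Reals in Hd.
  destruct (Hd (- d / 2)) as [e He]; [lra|].
  exists e. split; [apply cond_pos|]. split.
  - intros x Hx. assert (Hh : x - c <> 0) by lra.
    assert (Ha : Rabs (x - c) < e) by (rewrite Rabs_pos_eq; lra).
    specialize (He _ Hh Ha). replace (c + (x - c)) with x in He by ring.
    apply Rabs_def2 in He. destruct He as [He1 He2].
    assert (Hq : (f x - f c) / (x - c) < 0) by lra.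
    destruct (Rlt_le_dec (f x) (f c)); auto.
    exfalso. assert (0 <= (f x - f c) / (x - c)).
    { apply Rdiv_le_0_compat; lra. } lra.
  - intros x Hx. assert (Hh : x - c <> 0) by lra.
    assert (Ha : Rabs (x - c) < e) by (rewrite Rabs_left; lra).
    specialize (He _ Hh Ha). replace (c + (x - c)) with x in He by ring.
    apply Rabs_def2 in He. destruct He as [He1 He2].
    assert (Hq : (f x - f c) / (x - c) < 0) by lra.
    destruct (Rlt_le_dec (f c) (f x)); auto.
    exfalso. assert (0 <= (f x - f c) / (x - c)).
    { replace ((f x - f c) / (x - c)) with ((f c - f x) / (c - x)) by (field; lra).
      apply Rdiv_le_0_compat; lra. } lra.
Qed.

Section Main.
Variables (u0 v0 : R) (G : pt -> Prop) (Om r Tuu Tuv Tvv : R -> R -> R)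
  (rplus delta : R) (U0 : pt -> Prop).
Hypothesis HK : forall p, G p -> Kset u0 v0 p.
Hypothesis HU0 : forall p, G p -> U0 p.
Hypothesis HsOm : smooth_on U0 Om.
Hypothesis Hsr : smooth_on U0 r.
Hypothesis HOm : forall p, G p -> 0 < Om (fst p) (snd p).
Hypothesis Hr0 : forall p, G p -> 0 <= r (fst p) (snd p).
Hypothesis Hout : forall v, v0 <= v -> G (0, v).
Hypothesis HII : forall p x, G p -> Jminus u0 v0 p x -> G x.
Hypothesis HI : forall p, G p ->
          0 <= Tuu (fst p) (snd p) /\ 0 <= Tuv (fst p) (snd p) /\
          0 <= Tvv (fst p) (snd p).
Hypothesis Eu : forall u v, G (u, v) ->
     du (fun a b => / (Om a b) ^ 2 * du r a b) u v
       = - r u v * / (Om u v) ^ 2 * Tuu u v.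
Hypothesis Ev : forall u v, G (u, v) ->
     dv (fun a b => / (Om a b) ^ 2 * dv r a b) u v
       = - r u v * / (Om u v) ^ 2 * Tvv u v.
Hypothesis Em : forall u v, G (u, v) ->
     du (hawking_mass Om r) u v
       = 2 * (r u v) ^ 2 / (Om u v) ^ 2 *
           (Tuv u v * du r u v - Tuu u v * dv r u v).
Hypothesis HV : forall v, v0 <= v -> du r 0 v < 0.
Hypothesis HVI : forall v, v0 <= v -> dv r 0 v > 0.

Definition w (a b : R) := / (Om a b) ^ 2 * dv r a b.
Definition z (a b : R) := / (Om a b) ^ 2 * du r a b.

Lemma sm_u (f : R -> R -> R) l u v : smooth_on U0 f -> G (u, v) ->
  ex_derive (fun x => pder l f x v) u.
Proof. intros Hs Hg. apply (Hs l (u, v) (HU0 _ Hg)). Qed.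
Lemma sm_v (f : R -> R -> R) l u v : smooth_on U0 f -> G (u, v) ->
  ex_derive (fun y => pder l f u y) v.
Proof. intros Hs Hg. apply (Hs l (u, v) (HU0 _ Hg)). Qed.

Lemma Om_pos u v : G (u, v) -> 0 < Om u v.
Proof. intro H. exact (HOm _ H). Qed.

Lemma exd_w_u u v : G (u, v) -> ex_derive (fun x => w x v) u.
Proof.
  intro Hg. unfold w.
  assert (H1 := sm_u Om nil u v HsOm Hg). assert (H2 := sm_u r (Dv :: nil) u v Hsr Hg).
  simpl in H1, H2. assert (H3 := Om_pos u v Hg).
  auto_derive. repeat split; auto; intro; nra.
Qed.
Lemma exd_w_v u v : G (u, v) -> ex_derive (fun y => w u y) v.
Proof.
  intro Hg. unfold w.
  assert (H1 := sm_v Om nil u v HsOm Hg). assert (H2 := sm_v r (Dv :: nil) u v Hsr Hg).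
  simpl in H1, H2. assert (H3 := Om_pos u v Hg).
  auto_derive. repeat split; auto; intro; nra.
Qed.
Lemma exd_z_u u v : G (u, v) -> ex_derive (fun x => z x v) u.
Proof.
  intro Hg. unfold z.
  assert (H1 := sm_u Om nil u v HsOm Hg). assert (H2 := sm_u r (Du :: nil) u v Hsr Hg).
  simpl in H1, H2. assert (H3 := Om_pos u v Hg).
  auto_derive. repeat split; auto; intro; nra.
Qed.

Lemma w_cont_u u v : G (u, v) -> continuous (fun x => w x v) u.
Proof. intro Hg. apply (@ex_derive_continuous R_AbsRing R_NormedModule). apply exd_w_u; auto. Qed.

Lemma Gpast u v u' v' : G (u, v) -> 0 <= u' <= u -> v0 <= v' <= v -> G (u', v').
Proof.
  intros Hg H1 H2. apply (HII (u, v)); auto.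
  destruct (HK _ Hg) as [[Ha Hb] Hc]; simpl in *.
  split; [split; simpl; lra|]. simpl; lra.
Qed.

Lemma Gv0 u v : G (u, v) -> v0 <= v /\ 0 <= u <= u0.
Proof. intro Hg. destruct (HK _ Hg) as [[Ha Hb] Hc]; simpl in *. lra. Qed.

Lemma z_dec u v : G (u, v) -> exists d, is_derive (fun x => z x v) u d /\ d <= 0.
Proof.
  intro Hg. exists (Derive (fun x => z x v) u). split.
  - apply Derive_correct, exd_z_u; auto.
  - assert (E := Eu u v Hg). change (du z u v <= 0). unfold z.
    rewrite E. destruct (HI _ Hg) as [T1 _]. simpl in T1.
    assert (0 <= r u v) by exact (Hr0 _ Hg).
    assert (0 < Om u v) by (apply Om_pos; auto).
    assert (0 < / Om u v ^ 2) by (apply Rinv_0_lt_compat; nra).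
    assert (0 <= r u v * / Om u v ^ 2 * Tuu u v).
    { apply Rmult_le_pos; [apply Rmult_le_pos|]; lra. }
    lra.
Qed.

Lemma w_dec u v : G (u, v) -> exists d, is_derive (fun y => w u y) v d /\ d <= 0.
Proof.
  intro Hg. exists (Derive (fun y => w u y) v). split.
  - apply Derive_correct, exd_w_v; auto.
  - assert (E := Ev u v Hg). change (dv w u v <= 0). unfold w.
    rewrite E. destruct (HI _ Hg) as [_ [_ T1]]. simpl in T1.
    assert (0 <= r u v) by exact (Hr0 _ Hg).
    assert (0 < Om u v) by (apply Om_pos; auto).
    assert (0 < / Om u v ^ 2) by (apply Rinv_0_lt_compat; nra).
    assert (0 <= r u v * / Om u v ^ 2 * Tvv u v).
    { apply Rmult_le_pos; [apply Rmult_le_pos|]; lra. }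
    lra.
Qed.

Lemma inv2_pos u v : G (u, v) -> 0 < / Om u v ^ 2.
Proof. intro Hg. assert (0 < Om u v) by (apply Om_pos; auto).
  apply Rinv_0_lt_compat; nra. Qed.

Lemma ru_neg u v : G (u, v) -> du r u v < 0.
Proof.
  intro Hg. destruct (Gv0 u v Hg) as [Hv Hu].
  assert (Hm : z u v <= z 0 v).
  { apply (mono_nonincr (fun x => z x v) 0 u); [lra|].
    intros x Hx. apply z_dec. apply (Gpast u v); [assumption|lra|lra]. }
  assert (H0 : z 0 v < 0).
  { unfold z. assert (H := HV v Hv). assert (H' := inv2_pos 0 v (Hout v Hv)).
    nra. }
  assert (Hp := inv2_pos u v Hg). unfold z in Hm, H0.
  destruct (Rlt_or_le (du r u v) 0) as [Hl|Hl]; auto.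
  assert (0 <= / Om u v ^ 2 * du r u v) by (apply Rmult_le_pos; lra). lra.
Qed.

Lemma w_pos_iff u v : G (u, v) -> (0 < w u v <-> 0 < dv r u v).
Proof. intro Hg. assert (Hp := inv2_pos u v Hg). unfold w. split; intro; nra. Qed.
Lemma w_neg_iff u v : G (u, v) -> (w u v < 0 <-> dv r u v < 0).
Proof. intro Hg. assert (Hp := inv2_pos u v Hg). unfold w. split; intro; nra. Qed.
Lemma w_zero_iff u v : G (u, v) -> (w u v = 0 <-> dv r u v = 0).
Proof. intro Hg. assert (Hp := inv2_pos u v Hg). unfold w. split; intro.
  - apply Rmult_integral in H. destruct H; [lra|auto].
  - rewrite H; ring. Qed.

Lemma w_mono_v u v1 v2 : G (u, v2) -> v0 <= v1 <= v2 -> w u v2 <= w u v1.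
Proof.
  intros Hg Hv. destruct (Gv0 u v2 Hg).
  apply (mono_nonincr (fun y => w u y) v1 v2); [lra|].
  intros y Hy. apply w_dec. apply (Gpast u v2); [assumption|lra|lra].
Qed.

Lemma r_mono_u u1 u2 v : G (u2, v) -> 0 <= u1 <= u2 -> r u2 v <= r u1 v.
Proof.
  intros Hg Hu. destruct (Gv0 u2 v Hg).
  apply (mono_nonincr (fun x => r x v) u1 u2); [lra|].
  intros x Hx. exists (du r x v). split.
  - apply Derive_correct. assert (Hx' : G (x, v)) by (apply (Gpast u2 v); [assumption|lra|lra]).
    exact (sm_u r nil x v Hsr Hx').
  - apply Rlt_le, ru_neg. apply (Gpast u2 v); [assumption|lra|lra].
Qed.

Lemma r_mono_v u v1 v2 : G (u, v2) -> v0 <= v1 <= v2 -> 0 <= w u v2 -> r u v1 <= r u v2.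
Proof.
  intros Hg Hv Hw. destruct (Gv0 u v2 Hg).
  apply (mono_nondecr (fun y => r u y) v1 v2); [lra|].
  intros y Hy. assert (Hy' : G (u, y)) by (apply (Gpast u v2); [assumption|lra|lra]).
  exists (dv r u y). split.
  - apply Derive_correct. exact (sm_v r nil u y Hsr Hy').
  - assert (0 <= w u y).
    { assert (w u v2 <= w u y) by (apply w_mono_v; [assumption|lra]). lra. }
    assert (Hp := inv2_pos u y Hy'). unfold w in H1.
    destruct (Rle_or_lt 0 (dv r u y)) as [Hl|Hl]; auto.
    assert (0 < / Om u y ^ 2 * - dv r u y) by (apply Rmult_lt_0_compat; lra). lra.
Qed.


Hypothesis HA : forall p, regA G r p -> regW G r rplus delta p ->
          Tuv (fst p) (snd p) / (Om (fst p) (snd p)) ^ 2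
            < 1 / (4 * (r (fst p) (snd p)) ^ 2).

Definition S (p : pt) := regA G r p /\ regW G r rplus delta p.

Lemma F3 a b : S (a, b) -> exists d, is_derive (fun x => w x b) a d /\ d < 0.
Proof.
  intros [[Hg [Hy Hx]] [_ HW]]; simpl in *.
  assert (H1 := sm_u Om nil a b HsOm Hg). assert (H2 := sm_u r (Dv :: nil) a b Hsr Hg).
  assert (H3 := sm_u r (Du :: nil) a b Hsr Hg). assert (H4 := sm_u r nil a b Hsr Hg).
  simpl in H1, H2, H3, H4. assert (HO := Om_pos a b Hg).
  evar (l : R).
  assert (Hm : is_derive (fun x => r x b / 2 * (1 + 4 / (Om x b)^2 * du r x b * dv r x b)) a l).
  { auto_derive. repeat split; auto; intro; nra. unfold l. reflexivity. }
  evar (l2 : R).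
  assert (Hw : is_derive (fun x => w x b) a l2).
  { unfold w. auto_derive. repeat split; auto; intro; nra. unfold l2. reflexivity. }
  exists l2. split; [exact Hw|].
  assert (E := Em a b Hg). unfold du at 1 in E. unfold hawking_mass in E.
  assert (E' : l = 2 * r a b ^ 2 / Om a b ^ 2 * (Tuv a b * du r a b - Tuu a b * dv r a b)).
  { rewrite <- (is_derive_unique _ _ _ Hm). exact E. }
  clear E. rename E' into E.
  unfold l, l2 in *. clear l l2 Hm Hw.
  change (Derive (fun x => r x b) a) with (du r a b) in E.
  rewrite Hy in E |- *.
  set (X := du r a b) in *. set (R0 := r a b) in *. set (O := Om a b) in *.
  set (DY := Derive (fun x => dv r x b) a) in *.
  set (DO := Derive (fun x => Om x b) a) in *.
  set (DX := Derive (fun x => du r x b) a) in *.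
  assert (HT := HA (a, b)). simpl in HT.
  assert (HT' : Tuv a b / O ^ 2 < 1 / (4 * R0 ^ 2)).
  { apply HT; repeat split; simpl; auto. }
  clear HT.
  set (T := Tuv a b) in *.
  assert (HR0 : 0 <= R0) by exact (Hr0 _ Hg).
  assert (HOO : O * (O * 1) = O ^ 2) by ring.
  rewrite HOO in *.
  set (iO := / O ^ 2) in *.
  assert (HiO : O ^ 2 * iO = 1) by (unfold iO; field; lra).
  assert (HiOp : 0 < iO) by (unfold iO; apply Rinv_0_lt_compat; nra).
  replace (2 * R0 ^ 2 / O ^ 2 * (T * X - Tuu a b * 0)) with (2 * R0 ^ 2 * iO * T * X) in E
    by (unfold iO; field; lra).
  replace (T / O ^ 2) with (T * iO) in HT' by (unfold iO; field; lra).
  assert (E2 : X * (1/2 + 2 * R0 * (iO * DY) - 2 * R0 ^ 2 * (T * iO)) = 0).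
  { rewrite <- (Rminus_diag_eq _ _ E). field. lra. }
  apply Rmult_integral in E2. destruct E2 as [E2|E2]; [lra|].
  assert (HRp : 0 < R0).
  { destruct HR0 as [HR0|HR0]; auto. rewrite <- HR0 in E2. lra. }
  assert (HT2 : 2 * R0 ^ 2 * (T * iO) < 1/2).
  { assert (0 < 4 * R0 ^ 2) by nra.
    assert (Hq : 1 / (4 * R0 ^ 2) * (4 * R0 ^ 2) = 1) by (field; lra).
    assert ((T * iO) * (4 * R0 ^ 2) < 1 / (4 * R0 ^ 2) * (4 * R0 ^ 2))
      by (apply Rmult_lt_compat_r; lra).
    nra. }
  assert (HW2 : R0 * (iO * DY) < 0) by lra.
  assert (iO * DY < 0).
  { destruct (Rlt_or_le (iO * DY) 0); auto. nra. }
  lra.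
Qed.


Hypothesis Hopen : exists U : pt -> Prop, open U /\ forall p, G p <-> (U p /\ Kset u0 v0 p).
Hypothesis HVII : forall p q,
      closureK u0 v0 (regR G r) p ->
      closureK u0 v0 (regR G r) q -> Iminus u0 v0 p q ->
      (forall x, Jminus u0 v0 p x -> Jplus u0 v0 q x -> x <> p ->
         regR G r x \/ regA G r x) ->
      regR G r p \/ regA G r p.

Lemma G_open u v : G (u, v) -> exists eps, 0 < eps /\ forall x y,
  Rabs (x - u) < eps -> Rabs (y - v) < eps -> Kset u0 v0 (x, y) -> G (x, y).
Proof.
  intro Hg. destruct Hopen as [U [HU HG]].
  destruct (proj1 (HG _) Hg) as [HUp _].
  destruct (HU _ HUp) as [e He]. exists e. split; [apply cond_pos|].
  intros x y H1 H2 HKx. apply HG. split; auto. apply He. split; assumption.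
Qed.

Lemma rv_cont2 p : G p -> continuous (fun q : pt => dv r (fst q) (snd q)) p.
Proof. intro Hg. exact (proj2 (proj2 (Hsr (cons Dv nil) p (HU0 _ Hg)))). Qed.

Lemma w_sign_cont_pos u v : G (u, v) -> 0 < w u v ->
  exists eps, 0 < eps /\ forall x, Rabs (x - u) < eps -> 0 < w x v.
Proof. intros Hg Hp. apply (cont_pos (fun x => w x v)); auto. apply w_cont_u; auto. Qed.
Lemma w_sign_cont_neg u v : G (u, v) -> w u v < 0 ->
  exists eps, 0 < eps /\ forall x, Rabs (x - u) < eps -> w x v < 0.
Proof. intros Hg Hp. apply (cont_neg (fun x => w x v)); auto. apply w_cont_u; auto. Qed.

Lemma w0_pos v : v0 <= v -> 0 < w 0 v.
Proof. intro Hv. apply w_pos_iff; auto. apply HVI; auto. Qed.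

Lemma mkS x v : G (x, v) -> w x v = 0 -> r x v >= rplus - delta -> S (x, v).
Proof.
  intros Hg Hw Hr. split; [split; [auto|]|split; auto].
  simpl. split; [apply w_zero_iff; auto| apply ru_neg; auto].
Qed.

Lemma S_G x v : S (x, v) -> G (x, v).
Proof. intros [[H _] _]; exact H. Qed.
Lemma S_w x v : S (x, v) -> w x v = 0.
Proof. intros [[H [H1 _]] _]. apply w_zero_iff; auto. Qed.
Lemma S_r x v : S (x, v) -> r x v >= rplus - delta.
Proof. intros [_ [_ H]]. exact H. Qed.
Lemma S_pos x v : S (x, v) -> 0 < x.
Proof.
  intro HS. assert (Hg := S_G _ _ HS). destruct (Gv0 _ _ Hg) as [Hv [Hx _]].
  destruct Hx as [Hx|Hx]; auto. subst x. assert (H := w0_pos v Hv).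
  rewrite (S_w _ _ HS) in H. lra.
Qed.

Lemma IVTw u v : G (u, v) -> w u v <= 0 -> exists z0, 0 < z0 <= u /\ w z0 v = 0.
Proof.
  intros Hg Hw. destruct (Gv0 _ _ Hg) as [Hv Hu].
  destruct (Req_dec (w u v) 0) as [He|Hne].
  - exists u. split; auto. split; [|lra]. destruct (proj1 Hu) as [H|H]; auto.
    subst u. assert (H := w0_pos v Hv). lra.
  - assert (Hu0 : 0 < u).
    { destruct (proj1 Hu) as [H|H]; auto. subst u. assert (H := w0_pos v Hv). lra. }
    destruct (Ranalysis5.IVT_interv (fun x => - w x v) 0 u) as [z0 [Hz Hz0]].
    + intros x Hx. apply continuity_pt_filterlim.
      apply (continuous_opp (fun x => w x v)). apply w_cont_u.
      apply (Gpast u v); [assumption|lra|lra].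
    + lra.
    + assert (H := w0_pos v Hv). lra.
    + lra.
    + exists z0. split; [|lra]. split; [|lra].
      destruct (proj1 Hz) as [H|H]; auto. subst z0. assert (H := w0_pos v Hv). lra.
Qed.


Lemma lub_below (E : R -> Prop) (s y : R) : is_lub E s -> y < s -> exists x, E x /\ y < x.
Proof.
  intros [Hub Hl] Hy. apply NNPP. intro Hn.
  assert (s <= y). { apply Hl. intros x Hx. destruct (Rle_or_lt x y); auto.
    exfalso; apply Hn; exists x; auto. }
  lra.
Qed.

Lemma Zp u1 u2 v : S (u1, v) -> u1 < u2 -> G (u2, v) -> r u2 v >= rplus - delta -> w u2 v < 0.
Proof.
  intros HS H12 Hg2 Hr2.
  assert (Hw1 := S_w _ _ HS). assert (Hg1 := S_G _ _ HS).
  destruct (Gv0 _ _ Hg1) as [Hv [Hu1 _]].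
  destruct (F3 u1 v HS) as [d [Hd Hdn]].
  destruct (deriv_neg_sign _ _ _ Hd Hdn) as [e [He [Hright _]]].
  rewrite Hw1 in Hright.
  set (E := fun x => u1 < x <= u2 /\ forall y, u1 < y <= x -> w y v < 0).
  set (x0 := Rmin (u1 + e/2) u2).
  assert (Ex0 : E x0).
  { unfold E, x0. split.
    - split; [apply Rmin_glb_lt; lra|apply Rmin_r].
    - intros y Hy. apply Hright. split; [lra|]. 
      assert (Rmin (u1 + e/2) u2 <= u1 + e/2) by apply Rmin_l. lra. }
  destruct (completeness E) as [s Hs].
  { exists u2. intros x [Hx _]. lra. }
  { exists x0; auto. }
  assert (Hxs : x0 <= s) by (apply (proj1 Hs); auto).
  assert (Hsu : s <= u2) by (apply (proj2 Hs); intros x [Hx _]; lra).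
  assert (Hx0 : u1 < x0) by (destruct Ex0 as [[H _] _]; lra).
  assert (HL : forall y, u1 < y < s -> w y v < 0).
  { intros y Hy. destruct (lub_below E s y Hs (proj2 Hy)) as [x [[_ Hx] Hyx]].
    apply Hx. lra. }
  assert (Hgs : G (s, v)) by (apply (Gpast u2 v); [assumption|lra|lra]).
  destruct (Rlt_le_dec (w s v) 0) as [Hneg|Hnn].
  - destruct (Req_dec s u2) as [Heq|Hne]; [subst s; exact Hneg|].
    destruct (w_sign_cont_neg s v Hgs Hneg) as [e2 [He2 Hc]].
    set (x1 := Rmin (s + e2/2) u2).
    assert (Ex1 : E x1).
    { unfold E, x1. split.
      - split; [apply Rmin_glb_lt; lra|apply Rmin_r].
      - intros y Hy. destruct (Rlt_le_dec y s) as [Hys|Hys]; [apply HL; lra|].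
        apply Hc. assert (Rmin (s + e2/2) u2 <= s + e2/2) by apply Rmin_l.
        rewrite Rabs_pos_eq; lra. }
    assert (x1 <= s) by (apply (proj1 Hs); auto).
    assert (s < x1) by (unfold x1; apply Rmin_glb_lt; lra). lra.
  - exfalso.
    destruct (Req_dec (w s v) 0) as [Hz|Hnz].
    + assert (HSs : S (s, v)).
      { apply mkS; auto. assert (r u2 v <= r s v) by (apply r_mono_u; [assumption|lra]). lra. }
      destruct (F3 s v HSs) as [d3 [Hd3 Hdn3]].
      destruct (deriv_neg_sign _ _ _ Hd3 Hdn3) as [e3 [He3 [_ Hleft]]].
      set (y := Rmax (s - e3/2) ((u1 + s)/2)).
      assert (Hy1 : (u1 + s)/2 <= y) by apply Rmax_r.
      assert (Hy2 : y < s) by (apply Rmax_lub_lt; lra).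
      assert (Hy3 : s - e3/2 <= y) by apply Rmax_l.
      assert (w s v < w y v) by (apply Hleft; lra).
      assert (w y v < 0) by (apply HL; lra). lra.
    + assert (Hpos : 0 < w s v) by lra.
      destruct (w_sign_cont_pos s v Hgs Hpos) as [e2 [He2 Hc]].
      set (y := Rmax (s - e2/2) ((u1 + s)/2)).
      assert (Hy1 : (u1 + s)/2 <= y) by apply Rmax_r.
      assert (Hy2 : y < s) by (apply Rmax_lub_lt; lra).
      assert (Hy3 : s - e2/2 <= y) by apply Rmax_l.
      assert (0 < w y v) by (apply Hc; rewrite Rabs_left; lra).
      assert (w y v < 0) by (apply HL; lra). lra.
Qed.

Lemma S_uniq u1 u2 v : S (u1, v) -> S (u2, v) -> u1 = u2.
Proof.
  intros H1 H2. destruct (Rtotal_order u1 u2) as [H|[H|H]]; auto; exfalso.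
  - assert (Hw := Zp u1 u2 v H1 H (S_G _ _ H2) (S_r _ _ H2)). rewrite (S_w _ _ H2) in Hw. lra.
  - assert (Hw := Zp u2 u1 v H2 H (S_G _ _ H1) (S_r _ _ H1)). rewrite (S_w _ _ H1) in Hw. lra.
Qed.

Lemma Y_left c v u : S (c, v) -> 0 <= u < c -> 0 < w u v.
Proof.
  intros HS Hu. assert (Hgc := S_G _ _ HS). destruct (Gv0 _ _ Hgc) as [Hv _].
  assert (Hg : G (u, v)) by (apply (Gpast c v); [assumption|lra|lra]).
  destruct (Rlt_le_dec 0 (w u v)) as [H|H]; auto. exfalso.
  destruct (IVTw u v Hg H) as [z0 [Hz Hz0]].
  assert (Hgz : G (z0, v)) by (apply (Gpast c v); [assumption|lra|lra]).
  assert (HSz : S (z0, v)).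
  { apply mkS; auto. assert (r c v <= r z0 v) by (apply r_mono_u; [assumption|lra]).
    assert (H' := S_r _ _ HS). lra. }
  assert (H' := S_uniq _ _ _ HS HSz). lra.
Qed.


Definition Pp (a v : R) := exists u, 0 < u <= a /\ G (u, v) /\ w u v <= 0.

Lemma stepA a v : Pp a v -> exists eta, 0 < eta /\ forall v', v <= v' < v + eta -> Pp a v'.
Proof.
  intros [u [Hu [Hg Hw]]]. destruct (Gv0 _ _ Hg) as [Hv Hu'].
  destruct (G_open u v Hg) as [e [He Ho]]. exists e. split; auto.
  intros v' Hv'. exists u. 
  assert (Hg' : G (u, v')).
  { apply Ho. rewrite Rminus_diag_eq; auto; rewrite Rabs_R0; lra.
    rewrite Rabs_pos_eq; lra. split; simpl; lra. }
  split; auto. split; auto.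
  assert (w u v' <= w u v) by (apply w_mono_v; [assumption|lra]). lra.
Qed.

Lemma stepB a b V : S (a, b) -> b <= V -> (forall v, b <= v < V -> Pp a v) -> Pp a V.
Proof.
  intros HSab HbV HP.
  assert (Hgab := S_G _ _ HSab). assert (Ha := S_pos _ _ HSab).
  destruct (Gv0 _ _ Hgab) as [Hb [_ Hau0]].
  destruct (Req_dec b V) as [<-|HbV'].
  { exists a. split; [lra|]. split; auto. rewrite (S_w _ _ HSab). lra. }
  assert (HbV2 : b < V) by lra. clear HbV'.
  assert (HV0 : v0 <= V) by lra.
  assert (HG0 : G (0, V)) by (apply Hout; lra).
  assert (Hw0 : 0 < w 0 V) by (apply w0_pos; lra).
  set (Q := fun u => 0 <= u <= a /\ forall u', 0 <= u' <= u -> G (u', V) /\ 0 < w u' V).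
  assert (Q0 : Q 0).
  { split; [lra|]. intros u' Hu'. replace u' with 0 by lra. auto. }
  destruct (completeness Q) as [c Hc].
  { exists a. intros x [Hx _]. lra. }
  { exists 0; auto. }
  assert (Hc0 : 0 <= c) by (apply (proj1 Hc); auto).
  assert (Hca : c <= a) by (apply (proj2 Hc); intros x [Hx _]; lra).
  assert (HL : forall u', 0 <= u' < c -> G (u', V) /\ 0 < w u' V).
  { intros u' Hu'. destruct (lub_below Q c u' Hc (proj2 Hu')) as [x [[_ Hx] Hux]].
    apply Hx. lra. }
  destruct (classic (G (c, V))) as [HGc|HnGc].
  - destruct (Rle_lt_dec (w c V) 0) as [Hwc|Hwc].
    + exists c. split; [|split; auto]. split; auto.
      destruct Hc0 as [H|H]; auto. subst c. lra.
    + exfalso. destruct (Req_dec c a) as [Hca'|Hca'].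
      * subst c. assert (w a V <= w a b) by (apply w_mono_v; [assumption|lra]).
        rewrite (S_w _ _ HSab) in H. lra.
      * destruct (w_sign_cont_pos c V HGc Hwc) as [e1 [He1 Hc1]].
        destruct (G_open c V HGc) as [e2 [He2 Ho]].
        set (e := Rmin e1 e2).
        assert (He : 0 < e) by (apply Rmin_glb_lt; lra).
        assert (Hee1 : e <= e1) by apply Rmin_l. assert (Hee2 : e <= e2) by apply Rmin_r.
        set (x := Rmin (c + e/2) a).
        assert (Hx1 : x <= c + e/2) by apply Rmin_l. assert (Hx2 : x <= a) by apply Rmin_r.
        assert (Hx3 : c < x) by (apply Rmin_glb_lt; lra).
        assert (Qx : Q x).
        { split; [lra|]. intros u' Hu'. destruct (Rlt_le_dec u' c) as [Hl|Hl]; [apply HL; lra|].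
          split.
          - apply Ho. rewrite Rabs_pos_eq; lra. rewrite Rminus_diag_eq; auto; rewrite Rabs_R0; lra.
            split; simpl; lra.
          - apply Hc1. rewrite Rabs_pos_eq; lra. }
        assert (x <= c) by (apply (proj1 Hc); auto). lra.
  - exfalso.
    assert (Hcpos : 0 < c).
    { destruct Hc0 as [H|H]; auto. subst c. contradiction. }
    assert (HRx : forall x, G x -> 0 < w (fst x) (snd x) -> regR G r x).
    { intros [x1 x2] Hg Hw. split; auto. simpl. split.
      - apply Rlt_gt. apply (w_pos_iff x1 x2 Hg). auto.
      - apply ru_neg; auto. }
    set (q := (c/2, (b + V)/2)).
    assert (Hq : G q /\ 0 < w (c/2) ((b+V)/2)).
    { destruct (HL (c/2)) as [Hg Hw]; [lra|].
      split; [apply (Gpast (c/2) V); [assumption|lra|lra]|].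
      assert (w (c/2) V <= w (c/2) ((b+V)/2)) by (apply w_mono_v; [assumption|lra]). lra. }
    assert (Hp : regR G r (c, V) \/ regA G r (c, V)).
    { apply HVII with (q := q).
      - split; [split; simpl; lra|]. intros eps Heps.
        set (m := Rmin eps c).
        assert (Hm : 0 < m) by (apply Rmin_glb_lt; lra).
        assert (Hm1 : m <= eps) by apply Rmin_l. assert (Hm2 : m <= c) by apply Rmin_r.
        exists (c - m/2, V). simpl. destruct (HL (c - m/2)) as [Hg Hw]; [lra|].
        split; [apply HRx; auto|].
        split; [rewrite Rabs_left; lra|]. rewrite Rminus_diag_eq; auto; rewrite Rabs_R0; lra.
      - split; [unfold q; split; simpl; lra|]. intros eps Heps. exists q.
        split; [apply HRx; apply Hq|].
        rewrite !Rminus_diag_eq by reflexivity. rewrite Rabs_R0. lra.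
      - unfold q. split; [split; simpl; lra|]. simpl; lra.
      - intros [x1 x2] [HKx [Hx1 Hx2]] [_ [Hx1' Hx2']] Hne. simpl in *.
        destruct HKx as [HKx1 HKx2]. simpl in HKx1, HKx2.
        destruct (Rlt_le_dec x1 c) as [Hlt|Hge].
        + left. destruct (HL x1) as [Hg Hw]; [lra|].
          assert (Hgx : G (x1, x2)) by (apply (Gpast x1 V); [assumption|lra|lra]).
          apply HRx; auto. simpl.
          assert (w x1 V <= w x1 x2) by (apply w_mono_v; [assumption|lra]). lra.
        + assert (Hx1c : x1 = c) by lra. subst x1.
          assert (Hx2V : x2 < V).
          { destruct Hx2 as [H|H]; auto. subst x2. contradiction. }
          destruct (HP x2) as [u [Hu [Hgu Hwu]]]; [lra|].
          assert (Hcu : c <= u).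
          { destruct (Rlt_le_dec u c) as [Hl|Hl]; auto. exfalso.
            destruct (HL u) as [Hg Hw]; [lra|].
            assert (w u V <= w u x2) by (apply w_mono_v; [assumption|lra]). lra. }
          assert (Hgx : G (c, x2)) by (apply (Gpast u x2); [assumption|lra|lra]).
          assert (Hwx : 0 <= w c x2).
          { destruct (Rle_lt_dec 0 (w c x2)) as [H|H]; auto. exfalso.
            destruct (w_sign_cont_neg c x2 Hgx H) as [e [He Hce]].
            set (y := Rmax (c - e/2) (c/2)).
            assert (Hy1 : c/2 <= y) by apply Rmax_r.
            assert (Hy2 : y < c) by (apply Rmax_lub_lt; lra).
            assert (Hy3 : c - e/2 <= y) by apply Rmax_l.
            assert (w y x2 < 0) by (apply Hce; rewrite Rabs_left; lra).
            destruct (HL y) as [Hg Hw]; [lra|].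
            assert (w y V <= w y x2) by (apply w_mono_v; [assumption|lra]). lra. }
          destruct Hwx as [Hwx|Hwx].
          * left. apply HRx; auto.
          * right. split; auto. simpl. split.
            -- apply (w_zero_iff c x2 Hgx). auto.
            -- apply ru_neg; auto. }
    destruct Hp as [[Hg _]|[Hg _]]; contradiction.
Qed.


Lemma F4P a b : S (a, b) -> forall v, b <= v -> Pp a v.
Proof.
  intros HS.
  set (E := fun x => b <= x /\ forall v, b <= v <= x -> Pp a v).
  assert (Eb : E b).
  { split; [lra|]. intros v Hv. replace v with b by lra. apply (stepB a b b HS); [lra|].
    intros; lra. }
  destruct (classic (exists M, forall x, E x -> x <= M)) as [[M HM]|Hunb].
  - exfalso. destruct (completeness E) as [V HlV]; [exists M; exact HM|exists b; auto|].
    assert (HbV : b <= V) by (apply (proj1 HlV); auto).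
    assert (Hlt : forall v, b <= v < V -> Pp a v).
    { intros v Hv. destruct (lub_below E V v HlV (proj2 Hv)) as [x [[_ Hx] Hvx]].
      apply Hx. lra. }
    assert (HPV := stepB a b V HS HbV Hlt).
    destruct (stepA a V HPV) as [eta [Heta Hst]].
    assert (E (V + eta/2)).
    { split; [lra|]. intros v Hv. destruct (Rlt_le_dec v V) as [H|H].
      - apply Hlt; lra.
      - apply Hst; lra. }
    assert (V + eta/2 <= V) by (apply (proj1 HlV); auto). lra.
  - intros v Hv. apply NNPP. intro Hn. apply Hunb. exists v.
    intros x [Hx HPx]. destruct (Rle_or_lt x v) as [H|H]; auto.
    exfalso. apply Hn. apply HPx. lra.
Qed.

Lemma F4 a b : S (a, b) -> forall v, b <= v -> exists c, 0 < c <= a /\ S (c, v).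
Proof.
  intros HS v Hv. destruct (F4P a b HS v Hv) as [u [Hu [Hg Hw]]].
  destruct (IVTw u v Hg Hw) as [c [Hc Hwc]].
  assert (Hgab := S_G _ _ HS). destruct (Gv0 _ _ Hgab) as [Hb _].
  assert (Hgc : G (c, v)) by (apply (Gpast u v); [assumption|lra|lra]).
  exists c. split; [lra|]. apply mkS; auto.
  assert (r c b <= r c v) by (apply r_mono_v; [assumption|lra|lra]).
  assert (Hgcb : G (c, b)) by (apply (Gpast a b); [assumption|lra|lra]).
  assert (r a b <= r c b) by (apply r_mono_u; [assumption|lra]).
  assert (H' := S_r _ _ HS). lra.
Qed.

Lemma S_mono u1 v1 u2 v2 : S (u1, v1) -> S (u2, v2) -> v1 <= v2 -> u2 <= u1.
Proof.
  intros H1 H2 Hv. destruct (F4 u1 v1 H1 v2 Hv) as [c [Hc HSc]].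
  rewrite (S_uniq _ _ _ H2 HSc). lra.
Qed.


Lemma rv_pos_near x v : G (x, v) -> 0 < w x v -> exists e, 0 < e /\
  forall v', Rabs (v' - v) < e -> G (x, v') -> 0 < w x v'.
Proof.
  intros Hg Hw. apply (w_pos_iff x v Hg) in Hw.
  destruct (cont2_pos _ (x, v) (rv_cont2 _ Hg) Hw) as [e [He Hc]].
  exists e. split; auto. intros v' Hv' Hg'. apply (w_pos_iff x v' Hg').
  apply (Hc (x, v')); simpl; auto. rewrite Rminus_diag_eq; auto; rewrite Rabs_R0; lra.
Qed.

Lemma rv_neg_near x v : G (x, v) -> w x v < 0 -> exists e, 0 < e /\
  forall v', Rabs (v' - v) < e -> G (x, v') -> w x v' < 0.
Proof.
  intros Hg Hw. apply (w_neg_iff x v Hg) in Hw.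
  destruct (cont2_neg _ (x, v) (rv_cont2 _ Hg) Hw) as [e [He Hc]].
  exists e. split; auto. intros v' Hv' Hg'. apply (w_neg_iff x v' Hg').
  apply (Hc (x, v')); simpl; auto. rewrite Rminus_diag_eq; auto; rewrite Rabs_R0; lra.
Qed.

Lemma S_cont c v eps : S (c, v) -> 0 < eps -> exists d, 0 < d /\
  forall u' v', Rabs (v' - v) < d -> S (u', v') -> Rabs (u' - c) < eps.
Proof.
  intros HS Heps. assert (Hg := S_G _ _ HS). assert (Hc0 := S_pos _ _ HS).
  destruct (Gv0 _ _ Hg) as [Hv [_ Hcu0]].
  set (m := Rmin eps c / 2).
  assert (Hm : 0 < m) by (unfold m; assert (0 < Rmin eps c) by (apply Rmin_glb_lt; lra); lra).
  assert (Hm1 : m <= eps / 2) by (unfold m; assert (Rmin eps c <= eps) by apply Rmin_l; lra).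
  assert (Hm2 : m <= c / 2) by (unfold m; assert (Rmin eps c <= c) by apply Rmin_r; lra).
  remember (c - m) as x eqn:Hxdef.
  assert (Hgx : G (x, v)) by (apply (Gpast c v); [assumption|lra|lra]).
  assert (Hwx : 0 < w x v) by (apply (Y_left c v x HS); lra).
  destruct (rv_pos_near x v Hgx Hwx) as [ea [Hea Hca]].
  destruct (G_open x v Hgx) as [eb [Heb Hob]].
  destruct (F3 c v HS) as [d3 [Hd3 Hdn3]].
  destruct (deriv_neg_sign _ _ _ Hd3 Hdn3) as [e3 [He3 [Hright _]]].
  rewrite (S_w _ _ HS) in Hright.
  destruct (G_open c v Hg) as [e4 [He4 Ho4]].
  set (k := Rmin (Rmin e3 e4) eps / 2).
  assert (Hk : 0 < k) by (unfold k; assert (0 < Rmin (Rmin e3 e4) eps) by (repeat apply Rmin_glb_lt; lra); lra).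
  assert (Hk1 : k < e3) by (unfold k; assert (Rmin (Rmin e3 e4) eps <= Rmin e3 e4) by apply Rmin_l;
     assert (Rmin e3 e4 <= e3) by apply Rmin_l; lra).
  assert (Hk2 : k < e4) by (unfold k; assert (Rmin (Rmin e3 e4) eps <= Rmin e3 e4) by apply Rmin_l;
     assert (Rmin e3 e4 <= e4) by apply Rmin_r; lra).
  assert (Hk3 : k <= eps / 2) by (unfold k; assert (Rmin (Rmin e3 e4) eps <= eps) by apply Rmin_r; lra).
  remember (c + k) as y eqn:Hydef.
  destruct (Rle_lt_dec y u0) as [Hyu0|Hyu0].
  - assert (Hgy : G (y, v)).
    { apply Ho4. rewrite Rabs_pos_eq; lra.
      rewrite Rminus_diag_eq; auto; rewrite Rabs_R0; lra. unfold Kset; simpl; lra. }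
    assert (Hwy : w y v < 0) by (apply Hright; lra).
    destruct (rv_neg_near y v Hgy Hwy) as [ec [Hec Hcc]].
    set (dd := Rmin (Rmin ea eb) ec).
    assert (Hdd : 0 < dd) by (unfold dd; repeat apply Rmin_glb_lt; lra).
    assert (Hdd1 : dd <= ea) by (unfold dd; assert (Rmin (Rmin ea eb) ec <= Rmin ea eb) by apply Rmin_l;
       assert (Rmin ea eb <= ea) by apply Rmin_l; lra).
    assert (Hdd2 : dd <= eb) by (unfold dd; assert (Rmin (Rmin ea eb) ec <= Rmin ea eb) by apply Rmin_l;
       assert (Rmin ea eb <= eb) by apply Rmin_r; lra).
    assert (Hdd3 : dd <= ec) by (unfold dd; apply Rmin_r).
    exists dd. split; auto. intros u' v' Hv' HS'.
    assert (Hg' := S_G _ _ HS'). assert (Hu'0 := S_pos _ _ HS').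
    destruct (Gv0 _ _ Hg') as [Hv'0 _].
    destruct (Rle_lt_dec v v') as [Hvv|Hvv].
    + assert (Hu'c : u' <= c) by (apply (S_mono c v u' v'); auto).
      assert (Hgx' : G (x, v')).
      { apply Hob. rewrite Rminus_diag_eq; auto; rewrite Rabs_R0; lra. lra.
        unfold Kset; simpl; lra. }
      assert (Hwx' : 0 < w x v') by (apply Hca; auto; lra).
      destruct (Rle_lt_dec u' x) as [Hux|Hux].
      * exfalso. destruct Hux as [Hux|Hux].
        -- assert (Hr : r x v' >= rplus - delta).
           { assert (r x v <= r x v') by (apply r_mono_v; [assumption|lra|lra]).
             assert (r c v <= r x v) by (apply r_mono_u; [assumption|lra]).
             assert (H' := S_r _ _ HS). lra. }
           assert (H' := Zp u' x v' HS' Hux Hgx' Hr). lra.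
        -- subst u'. rewrite (S_w _ _ HS') in Hwx'. lra.
      * rewrite Rabs_left1; lra.
    + assert (Hcu' : c <= u') by (apply (S_mono u' v' c v); auto; lra).
      destruct (Rle_lt_dec y u') as [Hyu|Hyu].
      * exfalso.
        assert (Hgy' : G (y, v')) by (apply (Gpast u' v'); [assumption|lra|lra]).
        assert (Hwy' : w y v' < 0) by (apply Hcc; auto; lra).
        destruct Hyu as [Hyu|Hyu].
        -- assert (0 < w y v') by (apply (Y_left u' v' y HS'); lra). lra.
        -- subst u'. rewrite (S_w _ _ HS') in Hwy'. lra.
      * rewrite Rabs_pos_eq; lra.
  - set (dd := Rmin ea eb).
    assert (Hdd : 0 < dd) by (unfold dd; apply Rmin_glb_lt; lra).
    assert (Hdd1 : dd <= ea) by apply Rmin_l. assert (Hdd2 : dd <= eb) by apply Rmin_r.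
    exists dd. split; auto. intros u' v' Hv' HS'.
    assert (Hg' := S_G _ _ HS'). assert (Hu'0 := S_pos _ _ HS').
    destruct (Gv0 _ _ Hg') as [Hv'0 Hu'u0].
    destruct (Rle_lt_dec v v') as [Hvv|Hvv].
    + assert (Hu'c : u' <= c) by (apply (S_mono c v u' v'); auto).
      assert (Hgx' : G (x, v')).
      { apply Hob. rewrite Rminus_diag_eq; auto; rewrite Rabs_R0; lra. lra.
        unfold Kset; simpl; lra. }
      assert (Hwx' : 0 < w x v') by (apply Hca; auto; lra).
      destruct (Rle_lt_dec u' x) as [Hux|Hux].
      * exfalso. destruct Hux as [Hux|Hux].
        -- assert (Hr : r x v' >= rplus - delta).
           { assert (r x v <= r x v') by (apply r_mono_v; [assumption|lra|lra]).
             assert (r c v <= r x v) by (apply r_mono_u; [assumption|lra]).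
             assert (H' := S_r _ _ HS). lra. }
           assert (H' := Zp u' x v' HS' Hux Hgx' Hr). lra.
        -- subst u'. rewrite (S_w _ _ HS') in Hwx'. lra.
      * rewrite Rabs_left1; lra.
    + assert (Hcu' : c <= u') by (apply (S_mono u' v' c v); auto; lra).
      rewrite Rabs_pos_eq; lra.
Qed.


Lemma conn_half (U1 U2 : pt -> Prop) x1 y1 x2 y2 :
  open U1 -> open U2 -> (forall p, S p -> U1 p \/ U2 p) ->
  (forall p, S p -> U1 p -> U2 p -> False) ->
  S (x1, y1) -> U1 (x1, y1) -> S (x2, y2) -> U2 (x2, y2) -> y1 <= y2 -> False.
Proof.
  intros HO1 HO2 Hcov Hdis HS1 HU1 HS2 HU2 Hy.
  destruct (Req_dec y1 y2) as [<-|Hne].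
  { assert (x1 = x2) by (apply (S_uniq _ _ y1); auto). subst x2.
    apply (Hdis (x1, y1)); auto. }
  assert (Hlt : y1 < y2) by lra. clear Hne Hy.
  set (E := fun x => y1 <= x <= y2 /\ forall u v, y1 <= v <= x -> S (u, v) -> U1 (u, v)).
  assert (Ey1 : E y1).
  { split; [lra|]. intros u v Hv HSv. replace v with y1 in * by lra.
    rewrite (S_uniq u x1 y1 HSv HS1). auto. }
  destruct (completeness E) as [s Hs].
  { exists y2. intros x [Hx _]. lra. }
  { exists y1; auto. }
  assert (Hs1 : y1 <= s) by (apply (proj1 Hs); auto).
  assert (Hs2 : s <= y2) by (apply (proj2 Hs); intros x [Hx _]; lra).
  assert (HL : forall u v, y1 <= v < s -> S (u, v) -> U1 (u, v)).
  { intros u v Hv HSv. destruct (lub_below E s v Hs (proj2 Hv)) as [x [[_ Hx] Hvx]].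
    apply Hx; auto. lra. }
  destruct (F4 x1 y1 HS1 s Hs1) as [cs [_ HSs]].
  destruct (Hcov _ HSs) as [Hc1|Hc2].
  - destruct (HO1 _ Hc1) as [eps Heps].
    destruct (S_cont cs s eps HSs (cond_pos eps)) as [d [Hd Hcd]].
    destruct (Req_dec s y2) as [Hsy|Hsy].
    { subst s. assert (cs = x2) by (apply (S_uniq _ _ y2); auto). subst cs.
      apply (Hdis (x2, y2)); auto. }
    set (m := Rmin d eps).
    assert (Hm : 0 < m) by (unfold m; apply Rmin_glb_lt; [lra|apply cond_pos]).
    assert (Hm1 : m <= d) by apply Rmin_l. assert (Hm2 : m <= eps) by apply Rmin_r.
    remember (Rmin (s + m/2) y2) as x eqn:Hx.
    assert (Hx1 : x <= s + m/2) by (rewrite Hx; apply Rmin_l).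
    assert (Hx2 : x <= y2) by (rewrite Hx; apply Rmin_r).
    assert (Hx3 : s < x) by (rewrite Hx; apply Rmin_glb_lt; lra).
    assert (Ex : E x).
    { split; [lra|]. intros u v Hv HSv. destruct (Rlt_le_dec v s) as [Hvs|Hvs].
      - apply HL; auto; lra.
      - apply Heps. assert (Hv' : Rabs (v - s) < d) by (rewrite Rabs_pos_eq; lra).
        assert (Hu' := Hcd u v Hv' HSv).
        split; [exact Hu'|]. change (Rabs (v - s) < eps). rewrite Rabs_pos_eq; lra. }
    assert (x <= s) by (apply (proj1 Hs); auto). lra.
  - destruct (Req_dec s y1) as [Hsy|Hsy].
    { subst s. assert (cs = x1) by (apply (S_uniq _ _ y1); auto). subst cs.
      apply (Hdis (x1, y1)); auto. }
    destruct (HO2 _ Hc2) as [eps Heps].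
    destruct (S_cont cs s eps HSs (cond_pos eps)) as [d [Hd Hcd]].
    set (m := Rmin d eps).
    assert (Hm : 0 < m) by (unfold m; apply Rmin_glb_lt; [lra|apply cond_pos]).
    assert (Hm1 : m <= d) by apply Rmin_l. assert (Hm2 : m <= eps) by apply Rmin_r.
    remember (Rmax (s - m/2) y1) as v eqn:Hv.
    assert (Hv1 : s - m/2 <= v) by (rewrite Hv; apply Rmax_l).
    assert (Hv2 : y1 <= v) by (rewrite Hv; apply Rmax_r).
    assert (Hv3 : v < s) by (rewrite Hv; apply Rmax_lub_lt; lra).
    destruct (F4 x1 y1 HS1 v Hv2) as [u [_ HSu]].
    assert (HU1u : U1 (u, v)) by (apply HL; auto; lra).
    assert (HU2u : U2 (u, v)).
    { apply Heps. assert (Hv' : Rabs (v - s) < d) by (rewrite Rabs_left; lra).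
      assert (Hu' := Hcd u v Hv' HSu).
      split; [exact Hu'|]. change (Rabs (v - s) < eps). rewrite Rabs_left; lra. }
    apply (Hdis (u, v)); auto.
Qed.

Lemma conn : connected2 S.
Proof.
  intros [U1 [U2 [HO1 [HO2 [Hcov [[[x1 y1] [HS1 HU1]] [[[x2 y2] [HS2 HU2]] Hdis]]]]]]].
  destruct (Rle_or_lt y1 y2) as [H|H].
  - apply (conn_half U1 U2 x1 y1 x2 y2); auto.
  - apply (conn_half U2 U1 x2 y2 x1 y1); auto.
    + intros p Hp. destruct (Hcov p Hp); auto.
    + intros p Hp H2 H1. apply (Hdis p); auto.
    + lra.
Qed.


Lemma term_all a0 b0 : S (a0, b0) ->
  ( (terminates_at S 0 /\ asymptotic_to_EH S)
    \/
    ((exists ustar, 0 < ustar <= u0 /\ terminates_at S ustar) /\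
     exists u1 v1, 0 < u1 <= u0 /\ v0 <= v1 /\
       forall p, Kset u1 v1 p -> regW G r rplus delta p /\ regR G r p) ).
Proof.
  intros HS0.
  set (E := fun x => exists u v, S (u, v) /\ x = - u).
  destruct (completeness E) as [M HM].
  { exists 0. intros x [u [v [HSu ->]]]. assert (H := S_pos _ _ HSu). lra. }
  { exists (- a0). exists a0, b0. auto. }
  set (us := - M).
  assert (HSge : forall u v, S (u, v) -> us <= u).
  { intros u v HSu. assert (- u <= M) by (apply (proj1 HM); exists u, v; auto). unfold us; lra. }
  assert (Happ : forall eps, 0 < eps -> exists u v, S (u, v) /\ u < us + eps).
  { intros eps He. destruct (lub_below E M (M - eps) HM) as [x [[u [v [HSu ->]]] Hx]]; [lra|].
    exists u, v. split; auto. unfold us; lra. }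
  assert (Hus0 : 0 <= us).
  { assert (M <= 0). { apply (proj2 HM). intros x [u [v [HSu ->]]]. assert (H := S_pos _ _ HSu). lra. }
    unfold us; lra. }
  assert (Hg0 := S_G _ _ HS0). destruct (Gv0 _ _ Hg0) as [Hb0 [_ Ha0]].
  assert (Husa : us <= a0) by (apply (HSge a0 b0); auto).
  assert (Hlim : limit_pt_at_infinity S us).
  { intros eps V He. destruct (Happ eps He) as [u [v [HSu Hu]]].
    destruct (F4 u v HSu (Rmax (V + 1) v) (Rmax_r _ _)) as [c [Hc HSc]].
    exists (c, Rmax (V + 1) v). split; auto. simpl. split.
    - assert (V + 1 <= Rmax (V + 1) v) by apply Rmax_l. lra.
    - assert (us <= c) by (apply (HSge c _ HSc)). rewrite Rabs_pos_eq; lra. }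
  assert (Hterm : terminates_at S us).
  { split; auto. intros u' Hu'. destruct (Rtotal_order u' us) as [H|[H|H]]; auto; exfalso.
    - destruct (Hu' (us - u') 0) as [[p1 p2] [HSp [_ Hp]]]; [lra|].
      simpl in Hp. assert (us <= p1) by (apply (HSge p1 p2 HSp)).
      apply Rabs_def2 in Hp. lra.
    - destruct (Happ ((u' - us)/2)) as [u1 [v1 [HS1 Hu1]]]; [lra|].
      destruct (Hu' ((u' - us)/2) v1) as [[p1 p2] [HSp [Hp2 Hp]]]; [lra|].
      simpl in Hp, Hp2. apply Rabs_def2 in Hp.
      assert (p1 <= u1) by (apply (S_mono u1 v1 p1 p2); auto; lra). lra. }
  destruct (Req_dec us 0) as [Hz|Hnz].
  - left. rewrite Hz in Hterm, Hlim. split; auto.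
  - right. split.
    + exists us. split; [lra|auto].
    + exists (us / 2), b0. split; [lra|]. split; [lra|].
      intros [x y] [[Hx1 Hx2] Hy]. simpl in *.
      destruct (F4 a0 b0 HS0 y Hy) as [c [Hc HSc]].
      assert (Husc : us <= c) by (apply (HSge c y HSc)).
      assert (Hgc := S_G _ _ HSc).
      assert (Hgx : G (x, y)) by (apply (Gpast c y); [assumption|lra|lra]).
      assert (Hw : 0 < w x y) by (apply (Y_left c y x HSc); lra).
      split.
      * split; auto. simpl. assert (r c y <= r x y) by (apply r_mono_u; [assumption|lra]).
        assert (H' := S_r _ _ HSc). lra.
      * split; auto. simpl. split.
        -- apply Rlt_gt. apply (w_pos_iff x y Hgx). auto.
        -- apply ru_neg; auto.
Qed.

End Main.
Theorem lemma1
  (u0 v0 : R) (G : pt -> Prop) (Om r Tuu Tuv Tvv : R -> R -> R)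
  (rplus mplus delta : R)
  (Hsetup : setup u0 v0 G Om r Tuu Tuv Tvv)
  (* (I) *)
  (HI : forall p, G p ->
          0 <= Tuu (fst p) (snd p) /\ 0 <= Tuv (fst p) (snd p) /\
          0 <= Tvv (fst p) (snd p))
  (* (II) J^-(G) is contained in G *)
  (HII : forall p x, G p -> Jminus u0 v0 p x -> G x)
  (* (III) r_+ = sup_{C_out} r < oo *)
  (HIII : is_lub (fun x => exists v, v0 <= v /\ x = r 0 v) rplus)
  (* (IV) 0 <= m on C_out, m_+ = sup_{C_out} m < oo *)
  (HIV0 : forall v, v0 <= v -> 0 <= hawking_mass Om r 0 v)
  (HIV : is_lub (fun x => exists v, v0 <= v /\ x = hawking_mass Om r 0 v) mplus)
  (* (V) and (VI) *)
  (HV : forall v, v0 <= v -> du r 0 v < 0)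
  (HVI : forall v, v0 <= v -> dv r 0 v > 0)
  (* (VII) *)
  (HVII : forall p q,
      closureK u0 v0 (regR G r) p ->
      closureK u0 v0 (regR G r) q -> Iminus u0 v0 p q ->
      (forall x, Jminus u0 v0 p x -> Jplus u0 v0 q x -> x <> p ->
         regR G r x \/ regA G r x) ->
      regR G r p \/ regA G r p)
  (Hdelta : 0 < delta)
  (* condition (A) on A /\ W(delta) *)
  (HA : forall p, regA G r p -> regW G r rplus delta p ->
          Tuv (fst p) (snd p) / (Om (fst p) (snd p)) ^ 2
            < 1 / (4 * (r (fst p) (snd p)) ^ 2))
  (Hne : exists p, regA G r p /\ regW G r rplus delta p) :
  connected2 (fun p => regA G r p /\ regW G r rplus delta p) /\
  ( (terminates_at (fun p => regA G r p /\ regW G r rplus delta p) 0 /\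
     asymptotic_to_EH (fun p => regA G r p /\ regW G r rplus delta p))
    \/
    ((exists ustar, 0 < ustar <= u0 /\
        terminates_at (fun p => regA G r p /\ regW G r rplus delta p) ustar) /\
     exists u1 v1, 0 < u1 <= u0 /\ v0 <= v1 /\
       forall p, Kset u1 v1 p -> regW G r rplus delta p /\ regR G r p) ).
Proof.
  destruct Hsetup as (Hu0 & Hv0 & HK & Hgh & Hop & Hcio &
    [U [HUo [HU [HsO [Hsr _]]]]] & HOm & Hr0 & Hrpos & Eu & Ev & Em & Emv).
  assert (Hout : forall v, v0 <= v -> G (0, v)).
  { intros v Hv. apply Hcio. right. split; simpl; auto. }
  destruct Hne as [[a b] Hab].
  split.
  - exact (conn u0 v0 G Om r Tuu Tuv Tvv rplus delta U HK HU HsO Hsr HOm Hr0 Hout HII HI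
             Eu Ev Em HV HVI HA Hop HVII).
  - exact (term_all u0 v0 G Om r Tuu Tuv Tvv rplus delta U HK HU HsO Hsr HOm Hr0 Hout HII HI
             Eu Ev Em HV HVI HA Hop HVII a b Hab).
Qed.
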